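(* Suppose $(A,V,B)$ satisfies Schur-Weyl duality and $e\in B$ is an idempotent with $Ve\neq0$. Then the following are equivalent: (1) the triple $(A,Ve,eBe)$ satisfies Schur-Weyl duality; (2) every $eBe$-linear endomorphism of $Ve$ extends to a $B$-linear endomorphism of $V$ (i.e. the restriction map $\Theta_e:\operatorname{End}_B(V)\to\operatorname{End}_{eBe}(Ve)$, $\varphi\mapsto\varphi|_{Ve}$, is surjective).
   Context: $k$ is a field, $A,B$ are $k$-algebras, $V$ an $(A,B)$-bimodule. $(A,V,B)$ satisfies Schur-Weyl duality if the image of $A$ in $\operatorname{End}_k(V)$ (via $a\mapsto(v\mapsto av)$) equals $\operatorname{End}_B(V)$ and the image of $B$ (via $b\mapsto(v\mapsto vb)$) equals $\operatorname{End}_A(V)$. $Ve$ is an $(A,eBe)$-bimodule; any $B$-linear $\varphi$ satisfies $\varphi(Ve)\subseteq Ve$. *)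

(* Defs.v *)
From HB Require Import structures.
From mathcomp Require Import all_boot all_order all_algebra.
Set Implicit Arguments. Unset Strict Implicit. Unset Printing Implicit Defensive.
Import GRing.Theory.
Local Open Scope ring_scope.

Section Bimod.
Variables (k : fieldType) (A B : algType k) (V : lmodType k).

Definition is_bimodule (la : A -> V -> V) (ra : V -> B -> V) : Prop :=
  (forall (c : k) a a' v, la (c *: a + a') v = c *: la a v + la a' v) /\
  (forall a (c : k) v w, la a (c *: v + w) = c *: la a v + la a w) /\
  (forall a a' v, la (a * a') v = la a (la a' v)) /\
  (forall v, la 1 v = v) /\
  (forall (c : k) v b b', ra v (c *: b + b') = c *: ra v b + ra v b') /\
  (forall (c : k) v w b, ra (c *: v + w) b = c *: ra v b + ra w b) /\
  (forall v b b', ra v (b * b') = ra (ra v b) b') /\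
  (forall v, ra v 1 = v) /\
  (forall a v b, la a (ra v b) = ra (la a v) b).

(* Restricted setting: U is a k-subspace of V (e.g. Ve), C a subset of B
   (e.g. eBe); maps V -> V are considered as endomorphisms of U, i.e.
   only their values on U matter. *)
Definition klin_on (U : pred V) (f : V -> V) : Prop :=
  (forall u, U u -> U (f u)) /\
  (forall (c : k) u w, U u -> U w -> f (c *: u + w) = c *: f u + f w).

Definition is_EndB (ra : V -> B -> V) (U : pred V) (C : pred B) (f : V -> V)
  : Prop :=
  klin_on U f /\ (forall u b, U u -> C b -> f (ra u b) = ra (f u) b).

Definition is_EndA (la : A -> V -> V) (U : pred V) (f : V -> V) : Prop :=
  klin_on U f /\ (forall a u, U u -> f (la a u) = la a (f u)).

Definition schur_weyl (la : A -> V -> V) (ra : V -> B -> V)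
    (U : pred V) (C : pred B) : Prop :=
  [/\ (forall a, is_EndB ra U C (la a)),
      (forall f, is_EndB ra U C f -> exists a, forall u, U u -> f u = la a u),
      (forall b, C b -> is_EndA la U (fun v => ra v b)) &
      (forall g, is_EndA la U g ->
          exists2 b, C b & forall u, U u -> g u = ra u b)].

End Bimod.

(* Main.v *)
Require Import Defs.
From HB Require Import structures.
From mathcomp Require Import all_boot all_order all_algebra.
Import GRing.Theory.
Local Open Scope ring_scope.

Theorem lemma2 (k : fieldType) (A B : algType k) (V : lmodType k)
    (la : A -> V -> V) (ra : V -> B -> V) (e : B) :
  is_bimodule la ra ->
  schur_weyl la ra predT predT ->
  e * e = e ->
  (exists v : V, ra v e != 0) ->
  let Ve : pred V := fun v => ra v e == v in
  let eBe : pred B := fun b => e * b * e == b in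
  schur_weyl la ra Ve eBe <->
  (forall g, is_EndB ra Ve eBe g ->
     exists2 f, is_EndB ra predT predT f & forall u, Ve u -> f u = g u).
Proof.
move=> [laD [laL [laM [la1 [raD [raL [raM [ra1 laRA]]]]]]]] [sw1 sw2 sw3 sw4] He _ Ve eBe.
split.
- case=> _ H2 _ _ g Hg.
  have [a Ha] := H2 g Hg.
  exists (la a); first exact: sw1.
  by move=> u /Ha ->.
- move=> H; split.
  + move=> a; split; [split|].
    * move=> u; rewrite /Ve => /eqP Hu; apply/eqP; by rewrite -laRA Hu.
    * move=> c u w _ _; exact: laL.
    * move=> u b _ _; exact: laRA.
  + move=> g Hg. have [f Hf Hfg] := H g Hg. have [a Ha] := sw2 f Hf.
    exists a => u Hu. by rewrite -Hfg // Ha.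
  + move=> b Hb; split; [split|].
    * move=> u _; rewrite /Ve; apply/eqP.
      have Hbe : b * e = b by rewrite -(eqP Hb) -!mulrA He.
      by rewrite -raM Hbe.
    * move=> c u w _ _; exact: raL.
    * move=> a u _; symmetry; exact: laRA.
  + move=> g [[Hg1 Hg2] Hg3].
    have Vre : forall v, Ve (ra v e) by move=> v; rewrite /Ve -raM He.
    have [|b _ Hb] := sw4 (fun v => g (ra v e)).
      split; [split|].
      * by [].
      * move=> c u w _ _ /=. by rewrite raL Hg2.
      * move=> a u _ /=. by rewrite -laRA Hg3.
    exists (e * b * e).
      rewrite /eBe; apply/eqP.
      by rewrite -!mulrA He !mulrA He.
    move=> u Hu.
    have Hu' := eqP Hu.
    rewrite !raM Hu' -(Hb u isT) /= Hu'.
    exact/esym/eqP/Hg1.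
Qed.
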